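(* Let $u,w$ be words over $\{L,R\}$. If $w$ starts with $L$ and $Lu$ is derivable from $w$, then $LLu$ is derivable from $Lw$. Dually, if $w$ starts with $R$ and $Ru$ is derivable from $w$, then $RRu$ is derivable from $Rw$.
   Context: Words are finite strings (including the empty word) over $\{L,R\}$. A word $u$ is derivable from $w$ if it is obtained from $w$ by finitely many successive applications (in any order) of the following rules, where $v,v'$ denote arbitrary words: (1) $vRRv'\Rightarrow vRv'$; (1') $vLLv'\Rightarrow vLv'$; (2) $vLRv'\Rightarrow vv'$; (2') $vRLv'\Rightarrow vv'$; (3) $vv'\Rightarrow v'$ (tail formation). *)

(* Defs.v *)
From Stdlib Require Import List Relations.
Import ListNotations.

Inductive letter : Type := L | R.
Definition word := list letter.

Inductive step : word -> word -> Prop :=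
| rule1  : forall v v', step (v ++ [R; R] ++ v') (v ++ [R] ++ v')
| rule1' : forall v v', step (v ++ [L; L] ++ v') (v ++ [L] ++ v')
| rule2  : forall v v', step (v ++ [L; R] ++ v') (v ++ v')
| rule2' : forall v v', step (v ++ [R; L] ++ v') (v ++ v')
| rule3  : forall v v', step (v ++ v') v'.

Definition derivable (w u : word) : Prop := clos_refl_trans word step w u.

(* Main.v *)
Require Import Defs.
From Stdlib Require Import List Relations Lia.
Import ListNotations.

Inductive lstep : word -> word -> Prop :=
| l1  : forall v v', lstep (v ++ [R; R] ++ v') (v ++ [R] ++ v')
| l1' : forall v v', lstep (v ++ [L; L] ++ v') (v ++ [L] ++ v')
| l2  : forall v v', lstep (v ++ [L; R] ++ v') (v ++ v')
| l2' : forall v v', lstep (v ++ [R; L] ++ v') (v ++ v').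

Definition lstar := clos_refl_trans word lstep.

Lemma lstep_step a b : lstep a b -> step a b.
Proof. destruct 1; constructor. Qed.

Lemma lstar_der a b : lstar a b -> derivable a b.
Proof.
  induction 1.
  - apply rt_step, lstep_step; auto.
  - apply rt_refl.
  - eapply rt_trans; eauto.
Qed.

Lemma lstep_app x y a b : lstep a b -> lstep (x ++ a ++ y) (x ++ b ++ y).
Proof.
  destruct 1.
  - replace (x ++ (v ++ [R; R] ++ v') ++ y) with ((x ++ v) ++ [R; R] ++ (v' ++ y)) by (rewrite <- !app_assoc; reflexivity).
    replace (x ++ (v ++ [R] ++ v') ++ y) with ((x ++ v) ++ [R] ++ (v' ++ y)) by (rewrite <- !app_assoc; reflexivity).
    apply l1.
  - replace (x ++ (v ++ [L; L] ++ v') ++ y) with ((x ++ v) ++ [L; L] ++ (v' ++ y)) by (rewrite <- !app_assoc; reflexivity).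
    replace (x ++ (v ++ [L] ++ v') ++ y) with ((x ++ v) ++ [L] ++ (v' ++ y)) by (rewrite <- !app_assoc; reflexivity).
    apply l1'.
  - replace (x ++ (v ++ [L; R] ++ v') ++ y) with ((x ++ v) ++ [L; R] ++ (v' ++ y)) by (rewrite <- !app_assoc; reflexivity).
    replace (x ++ (v ++ v') ++ y) with ((x ++ v) ++ (v' ++ y)) by (rewrite <- !app_assoc; reflexivity).
    apply l2.
  - replace (x ++ (v ++ [R; L] ++ v') ++ y) with ((x ++ v) ++ [R; L] ++ (v' ++ y)) by (rewrite <- !app_assoc; reflexivity).
    replace (x ++ (v ++ v') ++ y) with ((x ++ v) ++ (v' ++ y)) by (rewrite <- !app_assoc; reflexivity).
    apply l2'.
Qed.

Lemma lstar_app x y a b : lstar a b -> lstar (x ++ a ++ y) (x ++ b ++ y).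
Proof.
  induction 1.
  - apply rt_step, lstep_app; auto.
  - apply rt_refl.
  - eapply rt_trans; eauto.
Qed.

Lemma split_lemma (m : word) (Hm : length m <= 1) : forall v v' p q,
  v ++ m ++ v' = p ++ q ->
  (exists v1, p = v ++ m ++ v1 /\ v' = v1 ++ q) \/
  (exists v2, v = p ++ v2 /\ q = v2 ++ m ++ v').
Proof.
  induction v as [|a v IH]; intros v' p q H.
  - destruct p as [|b p].
    + right. exists []. simpl in *. auto.
    + left. destruct m as [|c [|d m]]; simpl in *.
      * exists (b :: p). auto.
      * injection H; intros; subst. exists p; auto.
      * lia.
  - destruct p as [|b p].
    + right. exists (a :: v). simpl in *. auto.
    + simpl in H. injection H; intros H1 H2; subst.
      destruct (IH _ _ _ H1) as [[v1 [E1 E2]]|[v2 [E1 E2]]].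
      * left. exists v1. subst. auto.
      * right. exists v2. subst. auto.
Qed.

Lemma suffix_gen (M m : word) (Hm : length m <= 1) v v' p q :
  lstep (v ++ M ++ v') (v ++ m ++ v') ->
  (forall v2, lstep (v2 ++ M ++ v') (v2 ++ m ++ v')) ->
  v ++ m ++ v' = p ++ q ->
  exists p' q', v ++ M ++ v' = p' ++ q' /\ lstar q' q.
Proof.
  intros _ Hs E.
  destruct (split_lemma m Hm _ _ _ _ E) as [[v1 [E1 E2]]|[v2 [E1 E2]]]; subst.
  - exists (v ++ M ++ v1), q. split; [rewrite <- !app_assoc; reflexivity| apply rt_refl].
  - exists p, (v2 ++ M ++ v'). split; [rewrite <- !app_assoc; reflexivity|].
    apply rt_step, Hs.
Qed.

Lemma suffix_lstep a b : lstep a b -> forall p q, b = p ++ q ->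
  exists p' q', a = p' ++ q' /\ lstar q' q.
Proof.
  destruct 1; intros p q E.
  - eapply (suffix_gen [R;R] [R]); [simpl; lia|apply l1|intros; apply l1|exact E].
  - eapply (suffix_gen [L;L] [L]); [simpl; lia|apply l1'|intros; apply l1'|exact E].
  - eapply (suffix_gen [L;R] []); [simpl; lia|apply l2|intros; apply l2|exact E].
  - eapply (suffix_gen [R;L] []); [simpl; lia|apply l2'|intros; apply l2'|exact E].
Qed.

Lemma suffix_lstar s a : lstar s a -> forall p q, a = p ++ q ->
  exists p' q', s = p' ++ q' /\ lstar q' q.
Proof.
  induction 1; intros p q E.
  - eapply suffix_lstep; eauto.
  - subst. exists p, q. split; auto. apply rt_refl.
  - destruct (IHclos_refl_trans2 _ _ E) as [p1 [q1 [E1 H1]]].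
    destruct (IHclos_refl_trans1 _ _ E1) as [p2 [q2 [E2 H2]]].
    exists p2, q2. split; auto. eapply rt_trans; eauto.
Qed.

Lemma der_char w t : derivable w t -> exists p q, w = p ++ q /\ lstar q t.
Proof.
  induction 1.
  - destruct H.
    + exists []. eexists. split; [reflexivity|]. apply rt_step, l1.
    + exists []. eexists. split; [reflexivity|]. apply rt_step, l1'.
    + exists []. eexists. split; [reflexivity|]. apply rt_step, l2.
    + exists []. eexists. split; [reflexivity|]. apply rt_step, l2'.
    + exists v, v'. split; auto. apply rt_refl.
  - exists [], x. split; auto. apply rt_refl.
  - destruct IHclos_refl_trans2 as [p1 [q1 [E1 H1]]].
    destruct IHclos_refl_trans1 as [p2 [q2 [E2 H2]]].
    destruct (suffix_lstar _ _ H2 _ _ E1) as [p3 [q3 [E3 H3]]].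
    subst. exists (p2 ++ p3), q3. rewrite app_assoc. split; auto.
    eapply rt_trans; eauto.
Qed.

Lemma reduce x : exists y, length y <= 1 /\ lstar x y.
Proof.
  induction x as [|c x [y [Hy H]]].
  - exists []. split; [simpl; lia | apply rt_refl].
  - assert (H' : lstar (c :: x) (c :: y)) by
      (apply (lstar_app [c] [] ) in H; rewrite !app_nil_r in H; exact H).
    destruct y as [|d [|e y]]; [| | simpl in Hy; lia].
    + exists [c]. split; auto.
    + destruct c, d.
      * exists [L]. split; auto. eapply rt_trans; [exact H'|].
        apply rt_step. apply (l1' [] []).
      * exists []. split; [simpl; lia|]. eapply rt_trans; [exact H'|].
        apply rt_step. apply (l2 [] []).
      * exists []. split; [simpl; lia|]. eapply rt_trans; [exact H'|].
        apply rt_step. apply (l2' [] []).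
      * exists [R]. split; auto. eapply rt_trans; [exact H'|].
        apply rt_step. apply (l1 [] []).
Qed.

Lemma reduce_c c x : exists z, (z = [] \/ z = [c]) /\ lstar (c :: x) z.
Proof.
  destruct (reduce x) as [y [Hy H]].
  assert (H' : lstar (c :: x) (c :: y)) by
      (apply (lstar_app [c] [] ) in H; rewrite !app_nil_r in H; exact H).
  destruct y as [|d [|e y]]; [| | simpl in Hy; lia].
  - exists [c]. auto.
  - destruct c, d.
    + exists [L]. split; auto. eapply rt_trans; [exact H'|].
      apply rt_step. apply (l1' [] []).
    + exists []. split; auto. eapply rt_trans; [exact H'|].
      apply rt_step. apply (l2 [] []).
    + exists []. split; auto. eapply rt_trans; [exact H'|].
      apply rt_step. apply (l2' [] []).
    + exists [R]. split; auto. eapply rt_trans; [exact H'|].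
      apply rt_step. apply (l1 [] []).
Qed.

Lemma cc c q : lstar (c :: c :: q) (c :: q).
Proof. apply rt_step. destruct c; [apply (l1' [] q) | apply (l1 [] q)]. Qed.

Lemma main_c c u w : (exists w', w = c :: w') -> derivable w (c :: u) ->
  derivable (c :: w) (c :: c :: u).
Proof.
  intros [w' E] D. apply lstar_der.
  destruct (der_char _ _ D) as [p [q [E1 H]]].
  assert (Hq : lstar (c :: q) (c :: c :: u)) by
      (apply (lstar_app [c] [] ) in H; rewrite !app_nil_r in H; exact H).
  destruct p as [|a p].
  - simpl in E1. subst. exact Hq.
  - rewrite E in E1. simpl in E1. injection E1; intros E2 E3; subst w'; subst a; subst w.
    destruct (reduce_c c p) as [z [Hz Hr]].
    assert (H2 : lstar (c :: (c :: p) ++ q) (c :: z ++ q)) by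
      (apply (lstar_app [c] q) in Hr; exact Hr).
    eapply rt_trans; [exact H2|].
    destruct Hz; subst; simpl; auto.
    eapply rt_trans; [apply cc|]. exact Hq.
Qed.

Theorem mainTheorem8 :
  forall u w : word,
    ((exists w', w = L :: w') -> derivable w (L :: u) -> derivable (L :: w) (L :: L :: u)) /\
    ((exists w', w = R :: w') -> derivable w (R :: u) -> derivable (R :: w) (R :: R :: u)).
Proof. intros u w. split; apply main_c. Qed.
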